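(* Let $r_0,g_0,g_\infty\in\mathbb C$ and let $G(t,z)$ be the EGF of the GKP triangle $\left[\begin{array}{cc|c}-r_0,&1&g_0\\ 0,&-1&g_\infty\end{array}\right]$ (i.e. the case $r_\infty=1$, $r_1=-r_0$, $g_1=-g_0-g_\infty$ of the new parametrization). If $r_0\neq0$ then near $(0,0)$ $$G(t,z)=\bigl[(1+r_0z)^{1/r_0}\bigr]^{g_0}\bigl[(1-t)+t(1+r_0z)^{1/r_0}\bigr]^{g_\infty}=\bigl[t+(1-t)(1+r_0z)^{-1/r_0}\bigr]^{-g_0}\bigl[(1-t)+t(1+r_0z)^{1/r_0}\bigr]^{-g_1},$$ and if $r_0=0$ then $G(t,z)=e^{g_0z}\,[(1-t)+te^z]^{g_\infty}$. (Principal branches, equal to $1$ at $z=0$.)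
   Context: GKP triangle: for complex parameters $\alpha,\beta,\gamma,\alpha',\beta',\gamma'$, the array $T_{n,k}=\left[\begin{array}{cc|c}\alpha,&\beta&\gamma\\ \alpha',&\beta'&\gamma'\end{array}\right]_{n,k}$ is defined by $T_{0,0}=1$, $T_{n,k}=0$ if $n<0$, $k<0$ or $k>n$, and $T_{n+1,k+1}=[\alpha n+\beta(k+1)+\gamma]T_{n,k+1}+[\alpha' n+\beta' k+\gamma']T_{n,k}$ for $n\ge0$, $k\in\mathbb Z$; its EGF is $G(t,z)=\sum_{n\ge0}\sum_{k=0}^nT_{n,k}t^kz^n/n!$. *)

(* Defs.v *)
(* formal power series in z with coefficients in {poly F}
   (polynomials in t), F a field; specialized to F = R[i] (complex numbers). *)
From HB Require Import structures.
From mathcomp Require Import all_boot all_order all_algebra.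
From mathcomp Require Export complex.
From mathcomp Require Export reals.
Set Implicit Arguments. Unset Strict Implicit. Unset Printing Implicit Defensive.
Import Order.TTheory GRing.Theory Num.Theory.
Local Open Scope ring_scope.

Section GKP.
Variable F : fieldType.

(* GKP triangle [a, b | c ; a', b' | c']_{n,k} for 0 <= k (T_{n,k} = 0 for
   k < 0 is built in: T_{n+1,0} = (a n + c) T_{n,0}).  T_{n,k}=0 for k>n
   follows from the recurrence. *)
Fixpoint gkp (a b c a' b' c' : F) (n k : nat) {struct n} : F :=
  match n with
  | 0%N => if k == 0%N then 1 else 0
  | m.+1 =>
    match k with
    | 0%N => (a * m%:R + c) * gkp a b c a' b' c' m 0
    | j.+1 => (a * m%:R + b * (j.+1)%:R + c) * gkp a b c a' b' c' m j.+1
              + (a' * m%:R + b' * j%:R + c') * gkp a b c a' b' c' m j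
    end
  end.

Definition gkp_row a b c a' b' c' (n : nat) : {poly F} :=
  \sum_(k < n.+1) gkp a b c a' b' c' n k *: 'X^k.

Definition fps := nat -> {poly F}.

Definition gkp_egf a b c a' b' c' : fps :=
  fun n => (n`!%:R)^-1 *: gkp_row a b c a' b' c' n.

Definition fps_one : fps := fun n => (n == 0%N)%:R.
Definition fps_mul (f g : fps) : fps :=
  fun n => \sum_(i < n.+1) f i * g (n - i)%N.
Definition fps_pow (f : fps) (k : nat) : fps := iter k (fps_mul f) fps_one.
Definition fps_sub1 (f : fps) : fps := fun n => f n - (n == 0%N)%:R.
Definition fps_pmul (p : {poly F}) (f : fps) : fps := fun n => p * f n.

Definition gbinom (a : F) (k : nat) : F :=
  (\prod_(i < k) (a - i%:R)) / k`!%:R.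

(* (1 + f)^a := sum_k binom(a,k) f^k, for f with zero constant term: the
   formal counterpart of the principal branch, equal to 1 at z = 0. *)
Definition fps_binom (a : F) (f : fps) : fps :=
  fun n => \sum_(k < n.+1) (gbinom a k)%:P * fps_pow f k n.

Definition fps_exp (c : F) : fps := fun n => (c ^+ n / n`!%:R)%:P.

Definition fps_lin1 (r : F) : fps :=
  fun n => if n == 0%N then 1 else if n == 1%N then r%:P else 0.

Definition fps_u (r0 : F) : fps := fps_binom r0^-1 (fps_sub1 (fps_lin1 r0)).
Definition fps_uinv (r0 : F) : fps := fps_binom (- r0^-1) (fps_sub1 (fps_lin1 r0)).

End GKP.

(* Main.v *)
Require Import Defs.
From HB Require Import structures.
From mathcomp Require Import all_boot all_order all_algebra.
From mathcomp Require Import complex reals boolp.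
From mathcomp Require Import ring zify.
From Stdlib Require Import FunctionalExtensionality.
Set Implicit Arguments. Unset Strict Implicit. Unset Printing Implicit Defensive.
Import Order.TTheory GRing.Theory Num.Theory.
Local Open Scope ring_scope.

Lemma to0 (T : comRingType) (x y : T) : x = y -> x - y = 0.
Proof. by move=> ->; rewrite subrr. Qed.

Lemma alg0 (T : comRingType) (u L DA g A Du : T) :
  u*DA = g*A*Du -> L*Du = u -> u*(L*DA) = u*(g*A).
Proof.
move=> h1 h2; transitivity (L*(u*DA)); first ring.
rewrite h1; transitivity (g*A*(L*Du)); first ring.
by rewrite h2; ring.
Qed.

Lemma alg1 (T : comRingType) (L u Du A DA DtA C DC DtC X g0 gi : T) :
  L*DA = g0*A -> DtA = 0 -> L*Du = u ->
  (1 + X*(u-1))*DC = gi*C*(X*Du) -> (1 + X*(u-1))*DtC = gi*C*(u-1) ->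
  (1 + X*(u-1))*(L*(DA*C + A*DC)) =
  (1 + X*(u-1))*((g0 + gi*X)*(A*C) + X*(1-X)*(DtA*C + A*DtC)).
Proof.
move=> /to0 hA -> /to0 hu /to0 hC /to0 hCt.
apply/eqP; rewrite -subr_eq0; apply/eqP.
transitivity ((1 + X*(u-1))*C*(L*DA - g0*A) + A*L*((1 + X*(u-1))*DC - gi*C*(X*Du))
  + gi*X*A*C*(L*Du - u) - X*(1-X)*A*((1 + X*(u-1))*DtC - gi*C*(u-1))); first ring.
rewrite hA hC hu hCt; ring.
Qed.

Lemma alg2 (T : comRingType) (L u v Du Dv p A DA DtA C DC DtC X g0 gi : T) :
  L*Du = u -> L*Dv = -v -> u*v = 1 -> p*u = 1 + X*(u-1) ->
  p*DA = -g0*A*((1-X)*Dv) -> p*DtA = -g0*A*(-(v-1)) ->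
  (1 + X*(u-1))*DC = (g0+gi)*C*(X*Du) -> (1 + X*(u-1))*DtC = (g0+gi)*C*(u-1) ->
  p*(1 + X*(u-1))*u*(L*(DA*C + A*DC)) =
  p*(1 + X*(u-1))*u*((g0 + gi*X)*(A*C) + X*(1-X)*(DtA*C + A*DtC)).
Proof.
move=> /to0 hu /to0 hv huv hpu /to0 hA /to0 hAt /to0 hC /to0 hCt.
apply/eqP; rewrite -subr_eq0; apply/eqP.
transitivity (
   (1 + X*(u-1))*u*C*L*(p*DA - -g0*A*((1-X)*Dv))
 + p*u*A*L*((1 + X*(u-1))*DC - (g0+gi)*C*(X*Du))
 - X*(1-X)*(1 + X*(u-1))*u*C*(p*DtA - -g0*A*(-(v-1)))
 - X*(1-X)* p*u*A*((1 + X*(u-1))*DtC - (g0+gi)*C*(u-1))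
 + (1 + X*(u-1))*u*C*(-g0)*A*(1-X)*(L*Dv - -v)
 + p*u*A*(g0+gi)*C*X*(L*Du - u)
 + A*C*(g0*(1 + X*(u-1))*(1-X)*(u*v) + (g0+gi)*(p*u)*X*u
        - (g0+gi*X)*(p*u)*(1 + X*(u-1))
        - X*(1-X)*(g0*(1 + X*(u-1))*(u*v - u) + (g0+gi)*(p*u)*(u-1)))); first ring.
rewrite hA hC hAt hCt hv hu !mulr0 !addr0 !subr0 huv hpu; ring.
Qed.

Lemma alg3 (T : comRingType) (E DE DtE e De C DC DtC X g0 gi : T) :
  DE = g0*E -> DtE = 0 -> De = e ->
  (1 + X*(e-1))*DC = gi*C*(X*De) -> (1 + X*(e-1))*DtC = gi*C*(e-1) ->
  (1 + X*(e-1))*(DE*C + E*DC) =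
  (1 + X*(e-1))*((g0 + gi*X)*(E*C) + X*(1-X)*(DtE*C + E*DtC)).
Proof.
move=> -> -> -> /to0 hC /to0 hCt.
apply/eqP; rewrite -subr_eq0; apply/eqP.
transitivity (E*((1 + X*(e-1))*DC - gi*C*(X*e)) - X*(1-X)*E*((1 + X*(e-1))*DtC - gi*C*(e-1))); first ring.
rewrite hC hCt; ring.
Qed.

Section PS.
Variable F : numFieldType.

Definition ps : Type := nat -> {poly F}.
HB.instance Definition _ := gen_eqMixin ps.
HB.instance Definition _ := gen_choiceMixin ps.

Definition ps_add (f g : ps) : ps := fun n => f n + g n.
Definition ps_opp (f : ps) : ps := fun n => - f n.
Definition ps_zero : ps := fun n => 0.

Lemma ps_ext (f g : ps) : (forall n, f n = g n) -> f = g.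
Proof. move=> H; exact: functional_extensionality H. Qed.

Lemma ps_addA : associative ps_add.
Proof. by move=> f g h; apply: ps_ext => n; rewrite /ps_add addrA. Qed.
Lemma ps_addC : commutative ps_add.
Proof. by move=> f g; apply: ps_ext => n; rewrite /ps_add addrC. Qed.
Lemma ps_add0 : left_id ps_zero ps_add.
Proof. by move=> f; apply: ps_ext => n; rewrite /ps_add add0r. Qed.
Lemma ps_addN : left_inverse ps_zero ps_opp ps_add.
Proof. by move=> f; apply: ps_ext => n; rewrite /ps_add /ps_opp addNr. Qed.

HB.instance Definition _ := GRing.isZmodule.Build ps ps_addA ps_addC ps_add0 ps_addN.

Definition tr (N : nat) (f : ps) : {poly {poly F}} := \poly_(i < N) f i.

Lemma coefM_local (p p' q q' : {poly {poly F}}) n :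
  (forall i, (i <= n)%N -> p`_i = p'`_i) -> (forall i, (i <= n)%N -> q`_i = q'`_i) ->
  (p * q)`_n = (p' * q')`_n.
Proof.
move=> Hp Hq; rewrite !coefM; apply: eq_bigr => i _.
by rewrite Hp ?Hq ?leq_subr // -ltnS.
Qed.

Lemma mulE (f g : ps) N n : (n < N)%N -> fps_mul f g n = (tr N f * tr N g)`_n.
Proof.
move=> nN; rewrite coefM /fps_mul; apply: eq_bigr => i _.
have iN : (i < N)%N by apply: leq_ltn_trans nN; rewrite -ltnS.
have jN : (n - i < N)%N by apply: leq_ltn_trans nN; rewrite leq_subr.
by rewrite !coef_poly iN jN.
Qed.

Lemma tr_mul (f g : ps) N i : (i < N)%N -> (tr N (fps_mul f g))`_i = (tr N f * tr N g)`_i.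
Proof. by move=> iN; rewrite coef_poly iN (mulE _ _ iN). Qed.

Lemma ps_mulA : associative (@fps_mul F).
Proof.
move=> f g h; apply: ps_ext => n; rewrite (mulE _ _ (ltnSn n)) [RHS](mulE _ _ (ltnSn n)).
rewrite (@coefM_local _ (tr n.+1 f) _ (tr n.+1 g * tr n.+1 h)) //; last first.
  by move=> i ni; rewrite tr_mul.
rewrite [RHS](@coefM_local _ (tr n.+1 f * tr n.+1 g) _ (tr n.+1 h)) ?mulrA //.
by move=> i ni; rewrite tr_mul.
Qed.

Lemma ps_mulC : commutative (@fps_mul F).
Proof.
by move=> f g; apply: ps_ext => n; rewrite (mulE _ _ (ltnSn n)) [RHS](mulE _ _ (ltnSn n)) mulrC.
Qed.

Lemma ps_mul1 : left_id (@fps_one F) (@fps_mul F).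
Proof.
move=> f; apply: ps_ext => n; rewrite (mulE _ _ (ltnSn n)).
rewrite (@coefM_local _ 1 _ (tr n.+1 f)) ?mul1r.
- by rewrite coef_poly ltnSn.
- by move=> i ni; rewrite coef_poly ltnS ni coef1 /fps_one.
- by [].
Qed.

Lemma tr_add N (f g : ps) : tr N (f + g) = tr N f + tr N g.
Proof. by apply/polyP => i; rewrite coefD !coef_poly; case: ifP; rewrite ?addr0. Qed.

Lemma ps_mulDl : left_distributive (@fps_mul F) (@ps_add).
Proof.
move=> f g h; apply: ps_ext => n; rewrite /ps_add !(mulE _ _ (ltnSn n)).
by rewrite (tr_add n.+1 f g) mulrDl coefD.
Qed.

Lemma ps_one_neq0 : (@fps_one F : ps) != 0.
Proof.
apply/eqP => /(congr1 (fun f : ps => f 0%N)); rewrite /fps_one /=.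
by move/eqP; rewrite oner_eq0.
Qed.

HB.instance Definition _ := GRing.Zmodule_isComNzRing.Build ps ps_mulA ps_mulC ps_mul1 ps_mulDl ps_one_neq0.


Implicit Types (f g h : ps).

Lemma psD f g n : (f + g) n = f n + g n. Proof. by []. Qed.
Lemma psN f n : (- f) n = - f n. Proof. by []. Qed.
Lemma psB f g n : (f - g) n = f n - g n. Proof. by []. Qed.
Lemma ps0 n : (0 : ps) n = 0. Proof. by []. Qed.
Lemma ps1 n : (1 : ps) n = (n == 0%N)%:R. Proof. by []. Qed.
Lemma psM f g n : (f * g) n = \sum_(i < n.+1) f i * g (n - i)%N. Proof. by []. Qed.
Lemma psME f g n : (f * g) n = fps_mul f g n. Proof. by []. Qed.
Lemma psM0 f g : (f * g) 0%N = f 0%N * g 0%N.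
Proof. by rewrite psM big_ord1. Qed.

Lemma ps_sum I (r : seq I) (P : pred I) (Fs : I -> ps) n :
  (\sum_(i <- r | P i) Fs i) n = \sum_(i <- r | P i) Fs i n.
Proof.
elim: r => [|x r IH]; first by rewrite !big_nil.
by rewrite !big_cons; case: (P x); rewrite ?psD IH.
Qed.

Definition cst (p : {poly F}) : ps := fun n => if n == 0%N then p else 0.
Definition Zs : ps := fun n => (n == 1%N)%:R.

Lemma cstM p f n : (cst p * f) n = p * f n.
Proof.
rewrite psM big_ord_recl /= subn0 big1 ?addr0 // => i _.
by rewrite /cst /= mul0r.
Qed.

Lemma cstD p q : cst (p + q) = cst p + cst q.
Proof. by apply: ps_ext => n; rewrite psD /cst; case: ifP; rewrite ?addr0. Qed.
Lemma cstN p : cst (- p) = - cst p.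
Proof. by apply: ps_ext => n; rewrite psN /cst; case: ifP; rewrite ?oppr0. Qed.
Lemma cstB p q : cst (p - q) = cst p - cst q.
Proof. by rewrite cstD cstN. Qed.
Lemma cstMM p q : cst (p * q) = cst p * cst q.
Proof. by apply: ps_ext => n; rewrite cstM /cst; case: ifP; rewrite ?mulr0. Qed.
Lemma cst1 : cst 1 = 1.
Proof. by apply: ps_ext => n; rewrite ps1 /cst; case: ifP. Qed.
Lemma cst0 : cst 0 = 0.
Proof. by apply: ps_ext => n; rewrite /cst; case: ifP. Qed.
Lemma cst_nat k : cst k%:R = k%:R.
Proof. elim: k => [|k IH]; first by rewrite cst0. by rewrite -natr1 cstD IH cst1 natr1. Qed.

Lemma ZsM f n : (Zs * f) n = if n is m.+1 then f m else 0.
Proof.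
case: n => [|m]; first by rewrite psM0 /Zs /= mul0r.
rewrite psM big_ord_recl /= big_ord_recl /= big1 ?addr0.
  by rewrite /Zs /= mul0r mul1r add0r subSS subn0.
by move=> i _; rewrite /Zs /=; case: i => i /= _; rewrite mul0r.
Qed.

Definition agree n f g := forall i, (i <= n)%N -> f i = g i.

Lemma agree_refl n f : agree n f f. Proof. by []. Qed.
Lemma agree_sym n f g : agree n f g -> agree n g f.
Proof. by move=> H i ni; rewrite H. Qed.
Lemma agreeS n f g : agree n.+1 f g -> agree n f g.
Proof. by move=> H i ni; rewrite H // ltnW. Qed.

Lemma mul_agree n f f' g g' : agree n f f' -> agree n g g' -> agree n (f * g) (f' * g').
Proof.
move=> Hf Hg i ni; rewrite !psM; apply: eq_bigr => j _.
have ji : (j <= i)%N by rewrite -ltnS.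
rewrite Hf ?Hg //; first exact: leq_trans (leq_subr _ _) ni.
exact: leq_trans ji ni.
Qed.

Lemma mul0_agree n f g : agree n f 0 -> (f * g) n = 0.
Proof. by move=> H; rewrite (@mul_agree n f 0 g g) // mul0r. Qed.

Lemma ps_cancel (w : ps) f g : w 0%N = 1 -> w * f = w * g -> f = g.
Proof.
move=> w0 /eqP; rewrite -subr_eq0 -mulrBr => /eqP wh.
apply/eqP; rewrite -subr_eq0; apply/eqP; move: (f - g) wh => h wh.
suff: forall n, agree n h 0 by move=> H; apply: ps_ext => n; exact: (H n n).
elim=> [|n IH].
  move=> i; rewrite leqn0 => /eqP ->.
  by move/(congr1 (fun k : ps => k 0%N)): wh; rewrite psM0 w0 mul1r.
move=> i; rewrite leq_eqVlt => /orP [/eqP ->|]; last by apply: IH.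
move/(congr1 (fun k : ps => k n.+1)): wh; rewrite psM big_ord_recl /= subn0 w0 mul1r.
rewrite big1 ?addr0 // => j _.
by rewrite /bump /= add1n subSS IH ?mulr0 // leq_subr.
Qed.


Definition Dz f : ps := fun n => f n.+1 *+ n.+1.
Definition Dt f : ps := fun n => (f n)^`().

Definition isder (d : ps -> ps) :=
  [/\ forall f g, d (f + g) = d f + d g,
      forall f g, d (f * g) = d f * g + f * d g,
      forall c : F, d (cst c%:P) = 0 &
      forall n f g, agree n.+1 f g -> agree n (d f) (d g)].

Lemma Dz_der : isder Dz.
Proof.
split.
- by move=> f g; apply: ps_ext => n; rewrite /Dz !psD mulrnDl.
- move=> f g; apply: ps_ext => n; rewrite psD /Dz.
  rewrite psME (mulE _ _ (ltnSn n.+1)) -coef_deriv derivM coefD.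
  have hN : (n < n.+2)%N by [].
  rewrite !psME !(mulE _ _ hN); congr (_ + _); apply: coefM_local => // i ni;
    by rewrite coef_deriv !coef_poly (_ : (i.+1 < n.+2)%N) // (_ : (i < n.+2)%N) // ltnS leqW.
- by move=> c; apply: ps_ext => n; rewrite /Dz /cst /= mul0rn.
- by move=> n f g H i ni; rewrite /Dz H.
Qed.

Lemma Dt_der : isder Dt.
Proof.
split.
- by move=> f g; apply: ps_ext => n; rewrite /Dt !psD derivD.
- move=> f g; apply: ps_ext => n; rewrite psD /Dt !psM raddf_sum -big_split /=.
  by apply: eq_bigr => i _; rewrite derivM.
- by move=> c; apply: ps_ext => n; rewrite /Dt /cst; case: ifP; rewrite ?derivC ?deriv0.
- by move=> n f g H i ni; rewrite /Dt H // ltnW.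
Qed.

Lemma DzZ : Dz Zs = 1.
Proof. by apply: ps_ext => -[|n]; rewrite /Dz /Zs ps1 /= ?mulr1n ?mul0rn. Qed.
Lemma DtZ : Dt Zs = 0.
Proof. by apply: ps_ext => n; rewrite /Dt /Zs ps0; case: (n == 1%N); rewrite ?derivC ?deriv0 -?polyC1 ?derivC. Qed.
Lemma Dzcst p : Dz (cst p) = 0.
Proof. by apply: ps_ext => n; rewrite /Dz /cst /= mul0rn. Qed.
Lemma Dtcst p : Dt (cst p) = cst p^`().
Proof. by apply: ps_ext => n; rewrite /Dt /cst; case: ifP; rewrite ?deriv0. Qed.

Section Der.
Variable d : ps -> ps.
Hypothesis hd : isder d.

Lemma derD f g : d (f + g) = d f + d g. Proof. by case: hd. Qed.
Lemma derM f g : d (f * g) = d f * g + f * d g. Proof. by case: hd. Qed.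
Lemma derC c : d (cst c%:P) = 0. Proof. by case: hd. Qed.
Lemma der_agree n f g : agree n.+1 f g -> agree n (d f) (d g). Proof. by case: hd => _ _ _; apply. Qed.
Lemma der0 : d 0 = 0.
Proof. by apply: (addrI (d 0)); rewrite addr0 -derD addr0. Qed.
Lemma derN f : d (- f) = - d f.
Proof. by apply: (addrI (d f)); rewrite -derD !subrr der0. Qed.
Lemma derB f g : d (f - g) = d f - d g. Proof. by rewrite derD derN. Qed.
Lemma der1 : d 1 = 0. Proof. by rewrite -cst1 -polyC1 derC. Qed.
Lemma derCM c f : d (cst c%:P * f) = cst c%:P * d f.
Proof. by rewrite derM derC mul0r add0r. Qed.
Lemma der_exp f k : d (f ^+ k.+1) = f ^+ k * d f *+ k.+1.
Proof.
elim: k => [|k IH]; first by rewrite expr1 expr0 mul1r.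
by rewrite exprS derM IH !exprS; ring.
Qed.
End Der.

Lemma fps_powE f k : fps_pow f k = f ^+ k.
Proof. by elim: k => [//|k IH]; rewrite exprS -IH. Qed.

Lemma pow_vanish f k n : f 0%N = 0 -> (n < k)%N -> (f ^+ k) n = 0.
Proof.
move=> f0; elim: k n => [//|k IH] n nk.
rewrite exprS psM big1 // => i _.
case: i => [[|i]] /= hi; first by rewrite f0 mul0r.
rewrite IH ?mulr0 //; rewrite ltnS in nk hi.
lia.
Qed.


Lemma gbinom0 (a : F) : gbinom a 0 = 1.
Proof. by rewrite /gbinom big_ord0 fact0 divr1. Qed.

Lemma gbinomS (a : F) k : gbinom a k.+1 * k.+1%:R = gbinom a k * (a - k%:R).
Proof.
rewrite /gbinom big_ord_recr /= factS natrM.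
have h1 : (k.+1%:R : F) != 0 by rewrite pnatr_eq0.
have h2 : (k`!%:R : F) != 0 by rewrite pnatr_eq0 -lt0n fact_gt0.
move: h1 h2; move: (k.+1%:R : F) (k`!%:R : F) (\prod_(i < k) (a - i%:R)) => x y z hx hy.
by field; rewrite hx hy.
Qed.

Definition Bs (a : F) f N := \sum_(k < N) cst (gbinom a k)%:P * f ^+ k.

Lemma B_agree (a : F) f n N : f 0%N = 0 -> (n < N)%N -> fps_binom a f n = Bs a f N n.
Proof.
move=> f0 nN; rewrite /fps_binom /Bs ps_sum.
under [RHS]eq_bigr do rewrite cstM.
rewrite (big_ord_widen N (fun k => (gbinom a k)%:P * fps_pow f k n) nN) big_mkcond /=.
apply: eq_bigr => k _; rewrite fps_powE; case: ifP => // /negbT; rewrite -leqNgt => nk.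
by rewrite pow_vanish ?mulr0.
Qed.

Lemma binom0 (a : F) f : fps_binom a f 0%N = 1.
Proof. by rewrite /fps_binom big_ord1 gbinom0 polyC1 mul1r. Qed.

Lemma cstCn k : cst (k%:R)%:P = k%:R.
Proof. by rewrite polyC_natr cst_nat. Qed.

Lemma chainN d (a : F) f N : isder d ->
  (1 + f) * d (Bs a f N.+1) =
  cst a%:P * Bs a f N.+1 * d f - cst (gbinom a N * (a - N%:R))%:P * f ^+ N * d f.
Proof.
move=> hd; elim: N => [|N IH].
  rewrite /Bs big_ord1 gbinom0 expr0 mulr1 polyC1 cst1 der1 // mul1r mulr0.
  by rewrite (_ : (0%:R : F) = 0) // subr0 !mulr1 subrr.
have -> : Bs a f N.+2 = Bs a f N.+1 + cst (gbinom a N.+1)%:P * f ^+ N.+1.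
  by rewrite /Bs big_ord_recr.
rewrite derD // derCM // der_exp // mulrDr IH.
have hc := gbinomS a N.
move: hc; set c0 := gbinom a N; set c1 := gbinom a N.+1 => hc.
rewrite -hc !polyCM polyCB !cstMM cstB !cstCn !exprS.
ring.
Qed.

Lemma chain d (a : F) f n : isder d -> f 0%N = 0 ->
  ((1 + f) * d (fps_binom a f)) n = (cst a%:P * fps_binom a f * d f) n.
Proof.
move=> hd f0.
have hB : agree n.+1 (fps_binom a f) (Bs a f n.+2).
  by move=> i hi; apply: B_agree.
have hdB := der_agree hd hB.
rewrite (mul_agree (@agree_refl n (1 + f)) hdB (leqnn n)) chainN // psB.
set K := cst (gbinom a n.+1 * _)%:P.
have hv : agree n (K * f ^+ n.+1) 0.
  have := @mul_agree n K K (f ^+ n.+1) 0 (@agree_refl n K).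
  rewrite mulr0; apply=> i hi; rewrite pow_vanish //.
rewrite (mul0_agree _ hv) subr0.
apply: mul_agree (leqnn n) => //.
apply: mul_agree => //; exact: agree_sym (agreeS hB).
Qed.

Lemma chainE d (a : F) f : isder d -> f 0%N = 0 ->
  (1 + f) * d (fps_binom a f) = cst a%:P * fps_binom a f * d f.
Proof. by move=> hd f0; apply: ps_ext => n; apply: chain. Qed.


Lemma gkp_vanish (a b c a' b' c' : F) n k : (n < k)%N -> gkp a b c a' b' c' n k = 0.
Proof.
elim: n k => [|n IH] [|k] //= hk.
by rewrite !IH ?mulr0 ?addr0 // ltnW.
Qed.

Lemma coef_row (a b c a' b' c' : F) n k :
  (gkp_row a b c a' b' c' n)`_k = gkp a b c a' b' c' n k.
Proof.
rewrite /gkp_row -(poly_def _ (fun k => gkp a b c a' b' c' n k)) coef_poly.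
by case: ltnP => // h; rewrite gkp_vanish.
Qed.

Definition step (r0 g0 ginf : F) n (p : {poly F}) :=
  (g0%:P + ginf *: 'X - (r0 *+ n)%:P) * p + 'X * (1 - 'X) * p^`().

Lemma row_rec (r0 g0 ginf : F) n :
  gkp_row (- r0) 1 g0 0 (-1) ginf n.+1 = step r0 g0 ginf n (gkp_row (- r0) 1 g0 0 (-1) ginf n).
Proof.
apply/polyP => k; rewrite coef_row /step.
set P := gkp_row _ _ _ _ _ _ n.
have -> : 'X * (1 - 'X) * P^`() = 'X * P^`() - 'X * ('X * P^`()) by ring.
rewrite mulrBl mulrDl !coefD !coefN -scalerAl coefZ !coefCM !coefXM.
case: k => [|k] /=.
  rewrite !coef_row; ring.
rewrite !coef_deriv !coef_row.
case: k => [|k] /=.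
  ring.
ring.
Qed.


Definition Gs (r0 g0 ginf : F) : ps := gkp_egf (- r0) 1 g0 0 (-1) ginf.

Lemma stepZ (r0 g0 ginf : F) n (c : F) p : step r0 g0 ginf n (c *: p) = c *: step r0 g0 ginf n p.
Proof. by rewrite /step derivZ -!scalerAr scalerDr. Qed.

Lemma G_rec (r0 g0 ginf : F) n : Gs r0 g0 ginf n.+1 *+ n.+1 = step r0 g0 ginf n (Gs r0 g0 ginf n).
Proof.
rewrite /Gs /gkp_egf row_rec stepZ scalerMnl; congr (_ *: _).
have h1 : (n.+1%:R : F) != 0 by rewrite pnatr_eq0.
by rewrite factS natrM invfM -mulr_natr mulrAC mulVf // mul1r.
Qed.

Lemma mulrn_inj (p q : {poly F}) m : p *+ m.+1 = q *+ m.+1 -> p = q.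
Proof.
rewrite -!scaler_nat => /scalerI; apply; by rewrite pnatr_eq0.
Qed.

Lemma G0 (r0 g0 ginf : F) : Gs r0 g0 ginf 0%N = 1.
Proof.
rewrite /Gs /gkp_egf /gkp_row big_ord1 /= fact0 invr1 scale1r expr0.
by rewrite scale1r.
Qed.

Lemma uniq_sol (r0 g0 ginf : F) (H : ps) : H 0%N = 1 ->
  (forall n, H n.+1 *+ n.+1 = step r0 g0 ginf n (H n)) -> forall n, H n = Gs r0 g0 ginf n.
Proof.
move=> H0 HS; elim=> [|n IH]; first by rewrite H0 G0.
by apply: (@mulrn_inj _ _ n); rewrite HS G_rec IH.
Qed.

Lemma ODE_rec (r0 g0 ginf : F) (H : ps) :
  (1 + cst r0%:P * Zs) * Dz H = cst (g0%:P + ginf *: 'X) * H + cst ('X * (1 - 'X)) * Dt H ->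
  forall n, H n.+1 *+ n.+1 = step r0 g0 ginf n (H n).
Proof.
move=> E n; have := congr1 (fun f : ps => f n) E.
rewrite mulrDl mul1r psD -mulrA cstM ZsM psD !cstM /Dz /Dt /step polyCMn.
case: n => [|m] /= h.
  by rewrite mulr0n subr0 -h mulr0 addr0.
transitivity ((g0%:P + ginf *: 'X) * H m.+1 + 'X * (1 - 'X) * (H m.+1)^`() - r0%:P * (H m.+1 *+ m.+1)); last by ring.
rewrite -h; ring.
Qed.


Lemma sub1E f : fps_sub1 f = f - 1.
Proof. by apply: ps_ext. Qed.
Lemma pmulE p f : fps_pmul p f = cst p * f.
Proof. by apply: ps_ext => n; rewrite cstM. Qed.
Lemma lin1E (r : F) : fps_sub1 (fps_lin1 r) = cst r%:P * Zs.
Proof.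
apply: ps_ext => n; rewrite cstM /fps_sub1 /fps_lin1 /Zs.
by case: n => [|[|n]] /=; rewrite ?subrr ?mulr0 ?subr0 ?mulr1.
Qed.
Lemma Dz_cstM p f : Dz (cst p * f) = cst p * Dz f.
Proof. by rewrite (derM Dz_der) Dzcst mul0r add0r. Qed.
Lemma Dt_cstM p f : Dt (cst p * f) = cst p^`() * f + cst p * Dt f.
Proof. by rewrite (derM Dt_der) Dtcst. Qed.
Lemma deriv1F : (1 : {poly F})^`() = 0.
Proof. by rewrite -polyC1 derivC. Qed.

Lemma L0 (r0 : F) : (1 + cst r0%:P * Zs) 0%N = 1.
Proof. by rewrite psD cstM /Zs /= mulr0 addr0. Qed.

Lemma sub_0 (q : {poly F}) (u : ps) : u 0%N = 1 -> (cst q * (u - 1)) 0%N = 0.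
Proof. by move=> u0; rewrite cstM psB u0 subrr mulr0. Qed.

Lemma binom_sub_Dz (a : F) (q : {poly F}) (u : ps) : u 0%N = 1 ->
  (1 + cst q * (u - 1)) * Dz (fps_binom a (cst q * (u - 1))) =
  cst a%:P * fps_binom a (cst q * (u - 1)) * (cst q * Dz u).
Proof.
move=> u0; rewrite (chainE _ Dz_der (sub_0 _ u0)) Dz_cstM (derB Dz_der) (der1 Dz_der).
by rewrite subr0.
Qed.

Lemma binom_sub_Dt (a : F) (q : {poly F}) (u : ps) : u 0%N = 1 -> Dt u = 0 ->
  (1 + cst q * (u - 1)) * Dt (fps_binom a (cst q * (u - 1))) =
  cst a%:P * fps_binom a (cst q * (u - 1)) * (cst q^`() * (u - 1)).
Proof.
move=> u0 ut; rewrite (chainE _ Dt_der (sub_0 _ u0)) Dt_cstM (derB Dt_der) (der1 Dt_der).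
by rewrite ut subr0 mulr0 addr0.
Qed.

Lemma Zs0 : (cst 1 * (0 : ps)) = 0. Proof. by rewrite mulr0. Qed.

Lemma pow_Dz (c r0 : F) : r0 != 0 ->
  (1 + cst r0%:P * Zs) * Dz (fps_binom (c / r0) (fps_sub1 (fps_lin1 r0))) =
  cst c%:P * fps_binom (c / r0) (fps_sub1 (fps_lin1 r0)).
Proof.
move=> r0n; rewrite lin1E (chainE _ Dz_der); last by rewrite cstM /Zs /= mulr0.
rewrite Dz_cstM DzZ mulr1 mulrAC -cstMM -polyCM mulfVK //.
Qed.

Lemma pow_Dt (c r0 : F) : Dt (fps_binom c (fps_sub1 (fps_lin1 r0))) = 0.
Proof.
apply: (@ps_cancel (1 + cst r0%:P * Zs)); first exact: L0.
rewrite mulr0 lin1E (chainE _ Dt_der); last by rewrite cstM /Zs /= mulr0.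
by rewrite Dt_cstM DtZ derivC cst0 !mul0r mulr0 add0r mulr0.
Qed.

Lemma u_Dz (r0 : F) : r0 != 0 -> (1 + cst r0%:P * Zs) * Dz (fps_u r0) = fps_u r0.
Proof. by move=> r0n; rewrite /fps_u -[r0^-1]mul1r pow_Dz // polyC1 cst1 mul1r. Qed.
Lemma v_Dz (r0 : F) : r0 != 0 -> (1 + cst r0%:P * Zs) * Dz (fps_uinv r0) = - (fps_uinv r0 : ps).
Proof.
move=> r0n; rewrite /fps_uinv -mulN1r pow_Dz // polyCN polyC1 cstN cst1 mulN1r //; exact: mulN1r.
Qed.


Lemma A_facts (g0 : F) (L u : ps) : u 0%N = 1 -> Dt u = 0 -> L * Dz u = u ->
  L * Dz (fps_binom g0 (u - 1)) = cst g0%:P * fps_binom g0 (u - 1) /\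
  Dt (fps_binom g0 (u - 1)) = 0.
Proof.
move=> u0 ut hu.
have e1 : cst 1 * (u - 1) = u - 1 by rewrite cst1 mul1r.
have e2 : 1 + (u - 1) = u by ring.
split.
  apply: (ps_cancel u0); apply: alg0 hu.
  by have := binom_sub_Dz g0 1 u0; rewrite e1 e2 cst1 mul1r.
apply: (ps_cancel u0); rewrite mulr0.
by have := binom_sub_Dt g0 1 u0 ut; rewrite e1 e2 deriv1F cst0 mul0r mulr0.
Qed.

Lemma case1 (r0 g0 ginf : F) : r0 != 0 -> forall n,
  Gs r0 g0 ginf n =
  ((fps_binom g0 ((fps_u r0 : ps) - 1) : ps) * fps_binom ginf (cst 'X * ((fps_u r0 : ps) - 1))) n.
Proof.
move=> r0n n; symmetry; move: n; apply: uniq_sol.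
  by rewrite psM0 !binom0 mulr1.
apply: ODE_rec.
have u0 : fps_u r0 0%N = 1 by apply: binom0.
have hut : Dt (fps_u r0) = 0 by apply: pow_Dt.
have hu := u_Dz r0n.
have [hA hAt] := A_facts g0 u0 hut hu.
have hC := binom_sub_Dz ginf 'X u0.
have hCt := binom_sub_Dt ginf 'X u0 hut.
rewrite derivX cst1 mul1r in hCt.
rewrite (derM Dz_der) (derM Dt_der) -mul_polyC cstD !cstMM cstB cst1.
apply: (@ps_cancel (1 + cst 'X * ((fps_u r0 : ps) - 1))).
  by rewrite psD sub_0 // ps1 addr0.
exact: (alg1 (T:=ps) hA hAt hu hC hCt).
Qed.


Lemma case2 (r0 g0 ginf : F) : r0 != 0 -> forall n,
  Gs r0 g0 ginf n =
  ((fps_binom (- g0) (cst (1 - 'X) * ((fps_uinv r0 : ps) - 1)) : ps) *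
    fps_binom (- (- g0 - ginf)) (cst 'X * ((fps_u r0 : ps) - 1))) n.
Proof.
move=> r0n n; symmetry; move: n; apply: uniq_sol.
  by rewrite psM0 !binom0 mulr1.
apply: ODE_rec.
have u0 : fps_u r0 0%N = 1 by apply: binom0.
have v0 : fps_uinv r0 0%N = 1 by apply: binom0.
have hut : Dt (fps_u r0) = 0 by apply: pow_Dt.
have hvt : Dt (fps_uinv r0) = 0 by apply: pow_Dt.
have hu := u_Dz r0n.
have hv := v_Dz r0n.
have huv : (fps_u r0 : ps) * fps_uinv r0 = 1.
  have hD : Dz ((fps_u r0 : ps) * fps_uinv r0) = 0.
    apply: (ps_cancel (L0 r0)); rewrite mulr0 (derM Dz_der).
    transitivity (((1 + cst r0%:P * Zs) * Dz (fps_u r0)) * fps_uinv r0 +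
       (fps_u r0 : ps) * ((1 + cst r0%:P * Zs) * Dz (fps_uinv r0))); first ring.
    by rewrite hu hv; ring.
  apply: ps_ext => -[|n]; first by rewrite psM0 u0 v0 ps1 mulr1.
  have := congr1 (fun f : ps => f n) hD; rewrite /Dz ps0 ps1 /= => h.
  by apply: (@mulrn_inj _ _ n); rewrite h mul0rn.
have hA := binom_sub_Dz (- g0) (1 - 'X) v0.
have hAt := binom_sub_Dt (- g0) (1 - 'X) v0 hvt.
rewrite derivB deriv1F derivX sub0r cstN cst1 mulN1r in hAt.
have hC := binom_sub_Dz (- (- g0 - ginf)) 'X u0.
have hCt := binom_sub_Dt (- (- g0 - ginf)) 'X u0 hut.
rewrite derivX cst1 mul1r in hCt.
have e : - (- g0 - ginf) = g0 + ginf by ring.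
rewrite e in hC hCt *.
rewrite polyCD cstD in hC hCt.
rewrite cstB cst1 in hA hAt *.
rewrite polyCN cstN in hA hAt.
rewrite (derM Dz_der) (derM Dt_der) -mul_polyC cstD !cstMM cstB cst1.
have hpu : (1 + (1 - cst 'X) * ((fps_uinv r0 : ps) - 1)) * fps_u r0 =
           1 + cst 'X * ((fps_u r0 : ps) - 1).
  transitivity ((fps_u r0 : ps) + (1 - cst 'X) * ((fps_u r0 : ps) * fps_uinv r0 - (fps_u r0 : ps))); first ring.
  by rewrite huv; ring.
apply: (@ps_cancel ((1 + (1 - cst 'X) * ((fps_uinv r0 : ps) - 1)) *
   (1 + cst 'X * ((fps_u r0 : ps) - 1)) * fps_u r0)).
  rewrite !psM0 u0 !psD ps1 /= !psM0 !psB ps1 /= u0 v0 !subrr !mulr0 addr0 !mulr1 //.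
exact: (alg2 (T:=ps) hu hv huv hpu hA hAt hC hCt).
Qed.


Lemma exp_Dz (c : F) : Dz (fps_exp c) = cst c%:P * fps_exp c.
Proof.
apply: ps_ext => n; rewrite cstM /Dz /fps_exp -polyCMn -polyCM; congr (_%:P).
have h1 : (n.+1%:R : F) != 0 by rewrite pnatr_eq0.
have h2 : (n`!%:R : F) != 0 by rewrite pnatr_eq0 -lt0n fact_gt0.
rewrite -[_ *+ n.+1]mulr_natr exprS factS natrM.
move: h1 h2; move: (n.+1%:R : F) (n`!%:R : F) (c ^+ n) => x y z hx hy.
by field; rewrite hx hy.
Qed.

Lemma exp_Dt (c : F) : Dt (fps_exp c) = 0.
Proof. by apply: ps_ext => n; rewrite /Dt /fps_exp derivC. Qed.

Lemma exp0 (c : F) : fps_exp c 0%N = 1.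
Proof. by rewrite /fps_exp expr0 fact0 mulr1n divr1. Qed.

Lemma case3 (g0 ginf : F) : forall n,
  Gs 0 g0 ginf n =
  ((fps_exp g0 : ps) * fps_binom ginf (cst 'X * ((fps_exp 1 : ps) - 1))) n.
Proof.
move=> n; symmetry; move: n; apply: uniq_sol.
  by rewrite psM0 exp0 binom0 mulr1.
apply: ODE_rec.
have e0 : fps_exp 1 0%N = 1 :> {poly F} by apply: exp0.
have het := exp_Dt (1 : F).
have he : Dz (fps_exp (1 : F)) = fps_exp 1 by rewrite exp_Dz polyC1 cst1 mul1r.
have hC := binom_sub_Dz ginf 'X e0.
have hCt := binom_sub_Dt ginf 'X e0 het.
rewrite derivX cst1 mul1r in hCt.
rewrite polyC0 cst0 mul0r addr0 mul1r (derM Dz_der) (derM Dt_der) -mul_polyC cstD !cstMM cstB cst1.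
apply: (@ps_cancel (1 + cst 'X * ((fps_exp 1 : ps) - 1))).
  by rewrite psD sub_0 // ps1 addr0.
exact: (alg3 (T:=ps) (exp_Dz g0) (exp_Dt g0) he hC hCt).
Qed.

End PS.

Theorem mainTheorem4 (R : realType) (r0 g0 ginf : R[i]) :
  let G := gkp_egf (- r0) 1 g0 0 (-1) ginf in
  let g1 := - g0 - ginf in
  (r0 != 0 ->
     (forall n : nat,
        G n = fps_mul (fps_binom g0 (fps_sub1 (fps_u r0)))
                      (fps_binom ginf (fps_pmul 'X (fps_sub1 (fps_u r0)))) n)
  /\ (forall n : nat,
        G n = fps_mul (fps_binom (- g0) (fps_pmul (1 - 'X) (fps_sub1 (fps_uinv r0))))
                      (fps_binom (- g1) (fps_pmul 'X (fps_sub1 (fps_u r0)))) n))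
  /\
  (r0 = 0 ->
     forall n : nat,
        G n = fps_mul (fps_exp g0)
                      (fps_binom ginf (fps_pmul 'X (fps_sub1 (fps_exp 1)))) n).
Proof.
move=> G g1; split.
  move=> r0n; split => n.
    rewrite /G !sub1E pmulE; exact: (case1 g0 ginf r0n n).
  rewrite /G /g1 !sub1E !pmulE; exact: (case2 g0 ginf r0n n).
move=> r00 n; rewrite /G sub1E pmulE r00; exact: (case3 g0 ginf n).
Qed.
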